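(* Let $H$ be an almost-breakable monoid. Then: (i) the irreducibles of $\mathcal{P}_{\mathrm{fin},1}(H)$ are precisely the $2$-element subsets of $H$ containing $1_H$; (ii) every element of $\mathcal{P}_{\mathrm{fin},1}(H)$ admits a square-free factorization into irreducibles, i.e. a factorization in which no irreducible occurs more than once as a letter.
   Context: A monoid $H$ is almost-breakable if for all $x,y\in H$, $xy\in\{x,y\}$ or $yx\in\{x,y\}$. $\mathcal{P}_{\mathrm{fin},1}(H)$ denotes the set of non-empty finite subsets of $H$ containing $1_H$, a monoid under $XY=\{xy:x\in X,y\in Y\}$ with identity $\{1_H\}$. In a monoid $M$: $x\mid_M y$ iff $y\in MxM$; $x,y$ are associated if each divides the other; proper divisor means divides but not associated. A unit-divisor divides $1_M$; otherwise it is a non-unit-divisor. An irreducible is a non-unit-divisor $a$ with $a\neq xy$ for all non-unit-divisors $x,y$ properly dividing $a$. A factorization of an element $X$ is a finite word (possibly empty, for the identity) over the irreducibles whose product is $X$. *)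

(* Defs.v *)
From Stdlib Require Import List FunctionalExtensionality PropExtensionality ProofIrrelevance.
Import ListNotations.
Set Implicit Arguments.

Record monoid := Monoid {
  carrier :> Type;
  mul : carrier -> carrier -> carrier;
  one : carrier;
  mulA : forall x y z, mul x (mul y z) = mul (mul x y) z;
  mul1m : forall x, mul one x = x;
  mulm1 : forall x, mul x one = x
}.
Arguments mul {m} x y.
Arguments one {m}.

Section Generic.
Variable M : monoid.

Definition mdivides (x y : M) : Prop := exists a b : M, y = mul (mul a x) b.
Definition massociated (x y : M) : Prop := mdivides x y /\ mdivides y x.
Definition mproper_divisor (x y : M) : Prop := mdivides x y /\ ~ massociated x y.
Definition unit_divisor (x : M) : Prop := mdivides x one.
Definition non_unit_divisor (x : M) : Prop := ~ unit_divisor x.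
Definition irreducible (a : M) : Prop :=
  non_unit_divisor a /\
  forall x y : M, non_unit_divisor x -> non_unit_divisor y ->
    mproper_divisor x a -> mproper_divisor y a -> a <> mul x y.
Definition mprod (w : list M) : M := fold_right (fun a b => mul a b) one w.
Definition factorization (w : list M) (X : M) : Prop :=
  Forall irreducible w /\ mprod w = X.
Definition squarefree_factorization (w : list M) (X : M) : Prop :=
  factorization w X /\ NoDup w.
End Generic.

Definition almost_breakable (H : monoid) : Prop :=
  forall x y : H, (mul x y = x \/ mul x y = y) \/ (mul y x = x \/ mul y x = y).

Section Pfin.
Variable H : monoid.

Definition finite_subset (X : H -> Prop) : Prop :=
  exists l : list H, forall x, X x -> In x l.

(** non-empty finite subsets containing 1_H (non-emptiness follows from 1 \in X) *)
Definition Pfin1 : Type := { X : H -> Prop | finite_subset X /\ X one }.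

Definition set_mul (X Y : H -> Prop) : H -> Prop :=
  fun z => exists x y, X x /\ Y y /\ z = mul x y.

Lemma set_mul_prop (X Y : Pfin1) :
  finite_subset (set_mul (proj1_sig X) (proj1_sig Y)) /\ set_mul (proj1_sig X) (proj1_sig Y) one.
Proof.
destruct X as [X [[lx HX] X1]], Y as [Y [[ly HY] Y1]]; simpl; split.
- exists (map (fun p => mul (fst p) (snd p)) (list_prod lx ly)).
  intros z [x [y [Hx [Hy ->]]]].
  apply (in_map (fun p => mul (fst p) (snd p)) _ (x, y)).
  apply in_prod; auto.
- exists one, one; repeat split; auto. now rewrite mulm1.
Qed.

Definition pmul (X Y : Pfin1) : Pfin1 :=
  exist _ (set_mul (proj1_sig X) (proj1_sig Y)) (set_mul_prop X Y).

Lemma pone_prop : finite_subset (fun z : H => z = one) /\ (fun z : H => z = one) one.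
Proof. split; [exists [one]; intros x ->; now left | reflexivity]. Qed.

Definition pone : Pfin1 := exist _ (fun z => z = one) pone_prop.

Lemma Pfin1_eq (X Y : Pfin1) : (forall z, proj1_sig X z <-> proj1_sig Y z) -> X = Y.
Proof.
destruct X as [X pX], Y as [Y pY]; simpl; intros E.
assert (X = Y) as ->.
{ apply functional_extensionality; intro z; apply propositional_extensionality; auto. }
f_equal; apply proof_irrelevance.
Qed.

Lemma pmulA (X Y Z : Pfin1) : pmul X (pmul Y Z) = pmul (pmul X Y) Z.
Proof.
apply Pfin1_eq; intro w; simpl; unfold set_mul; split.
- intros [x [t [Hx [[y [z [Hy [Hz ->]]]] ->]]]].
  exists (mul x y), z; repeat split; auto.
  + exists x, y; auto.
  + apply mulA.
- intros [t [z [[x [y [Hx [Hy ->]]]] [Hz ->]]]].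
  exists x, (mul y z); repeat split; auto.
  + exists y, z; auto.
  + symmetry; apply mulA.
Qed.

Lemma pmul1m (X : Pfin1) : pmul pone X = X.
Proof.
apply Pfin1_eq; intro w; simpl; unfold set_mul; split.
- intros [x [y [-> [Hy ->]]]]; now rewrite mul1m.
- intros Hw; exists one, w; repeat split; auto; now rewrite mul1m.
Qed.

Lemma pmulm1 (X : Pfin1) : pmul X pone = X.
Proof.
apply Pfin1_eq; intro w; simpl; unfold set_mul; split.
- intros [x [y [Hx [-> ->]]]]; now rewrite mulm1.
- intros Hw; exists w, one; repeat split; auto; now rewrite mulm1.
Qed.

Definition PfinMonoid : monoid := @Monoid Pfin1 pmul pone pmulA pmul1m pmulm1.
End Pfin.

(* Main.v *)
Require Import Defs.
From Stdlib Require Import List.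
From Stdlib Require Import Classical Lia FunctionalExtensionality PropExtensionality ProofIrrelevance Permutation.
Import ListNotations.

Lemma idem (H : monoid) (hH : almost_breakable H) (x : H) : mul x x = x.
Proof. destruct (hH x x) as [[E|E]|[E|E]]; exact E. Qed.

Arguments idem {H} hH x.

Lemma mdiv_trans (M : monoid) (x y z : M) :
  mdivides M x y -> mdivides M y z -> mdivides M x z.
Proof.
intros [a [b ->]] [c [d ->]]. exists (mul c a), (mul b d).
rewrite !mulA. reflexivity.
Qed.

Lemma mdiv_refl (M : monoid) (x : M) : mdivides M x x.
Proof. exists one, one. rewrite mul1m, mulm1. reflexivity. Qed.

Lemma mdiv_l (M : monoid) (x y : M) : mdivides M x (mul x y).
Proof. exists one, y. rewrite mul1m. reflexivity. Qed.

Lemma mdiv_r (M : monoid) (x y : M) : mdivides M y (mul x y).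
Proof. exists x, one. rewrite mulm1. reflexivity. Qed.

Lemma mdiv_total H (hH : almost_breakable H) (x y : H) :
  mdivides H x y \/ mdivides H y x.
Proof.
destruct (hH x y) as [[E|E]|[E|E]].
- right. exists x, one. rewrite mulm1, E. reflexivity.
- left. exists one, y. rewrite mul1m, E. reflexivity.
- right. exists one, x. rewrite mul1m, E. reflexivity.
- left. exists y, one. rewrite mulm1, E. reflexivity.
Qed.

Arguments mdiv_total {H} hH x y.

Lemma choose_bottom H (hH : almost_breakable H) (l : list H) :
  forall P : H -> Prop, (forall x, P x -> In x l) -> (exists x, P x) ->
  exists a, P a /\ forall x, P x -> mdivides H x a.
Proof.
induction l as [|b l IH]; intros P HP [x0 Hx0].
- destruct (HP _ Hx0).
- destruct (classic (exists x, P x /\ x <> b)) as [Ex|Nx].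
  + destruct (IH (fun x => P x /\ x <> b)) as [a [[Pa nab] Ha]].
    * intros x [Px nxb]. destruct (HP x Px) as [->|?]; [congruence|assumption].
    * exact Ex.
    * destruct (classic (P b)) as [Pb|nPb].
      -- destruct (mdiv_total hH b a) as [ba|ab].
         ++ exists a. split; [exact Pa|]. intros x Px.
            destruct (classic (x = b)) as [->|nxb]; [exact ba|]. apply Ha; auto.
         ++ exists b. split; [exact Pb|]. intros x Px.
            destruct (classic (x = b)) as [->|nxb].
            ** apply mdiv_refl.
            ** apply mdiv_trans with a; [apply Ha; auto | exact ab].
      -- exists a. split; [exact Pa|]. intros x Px. apply Ha. split; [exact Px|].
         intros ->. contradiction.
  + assert (Hb : forall x, P x -> x = b).
    { intros x Px. apply NNPP. intro n. apply Nx. exists x; auto. }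
    exists x0. split; [exact Hx0|]. intros x Px.
    rewrite (Hb x Px), (Hb x0 Hx0). apply mdiv_refl.
Qed.

Lemma key H (hH : almost_breakable H) (P : H -> Prop) (a : H) :
  (forall x, P x -> mdivides H x a) ->
  (forall x, P x -> mul x a = x \/ mul x a = a) \/
  (forall x, P x -> mul a x = x \/ mul a x = a).
Proof.
intros Hd.
destruct (classic (forall x, P x -> mul x a = x \/ mul x a = a)) as [L|nL];
  [left; exact L|].
right. intros y Py.
destruct (classic (mul a y = y \/ mul a y = a)) as [R|nR]; [exact R|exfalso].
apply nL. intros x Px.
destruct (classic (mul x a = x \/ mul x a = a)) as [L|nLx]; [exact L|exfalso].
assert (Hax : mul a x = a).
{ destruct (hH x a) as [E|[E|E]]; [contradiction| |exact E].
  exfalso. destruct (Hd x Px) as [u [v Ha]].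
  assert (E1 : mul (mul u x) (mul (mul u x) v) = mul (mul u x) v)
    by (rewrite mulA, (idem hH); reflexivity).
  rewrite <- Ha in E1.
  assert (E2 : mul a (mul x a) = mul x a) by (rewrite mulA, E; reflexivity).
  assert (E3 : mul u (mul x a) = a) by (rewrite mulA; exact E1).
  assert (E4 : mul (mul u (mul x a)) (mul x a) = mul u (mul x a))
    by (rewrite <- mulA, (idem hH); reflexivity).
  rewrite E3 in E4. rewrite E2 in E4. apply nLx. right. exact E4. }
assert (Hya : mul y a = a).
{ destruct (hH y a) as [[E|E]|E]; [|exact E|contradiction].
  exfalso. destruct (Hd y Py) as [u [v Ha]].
  assert (E1 : mul (mul u (mul y v)) (mul y v) = mul u (mul y v))
    by (rewrite <- mulA, (idem hH); reflexivity).
  replace (mul u (mul y v)) with a in E1 by (rewrite Ha, mulA; reflexivity).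
  assert (E2 : mul (mul a y) a = mul a y) by (rewrite <- mulA, E; reflexivity).
  assert (E3 : mul (mul a y) v = a) by (rewrite <- mulA; exact E1).
  assert (E4 : mul (mul a y) (mul (mul a y) v) = mul (mul a y) v)
    by (rewrite mulA, (idem hH); reflexivity).
  rewrite E3 in E4. rewrite E2 in E4. apply nR. right. exact E4. }
assert (A1 : mul a (mul x a) = a) by (rewrite mulA, Hax, (idem hH); reflexivity).
assert (A2 : mul (mul a y) a = a) by (rewrite <- mulA, Hya, (idem hH); reflexivity).
assert (A3 : mul a (mul a y) = mul a y) by (rewrite mulA, (idem hH); reflexivity).
assert (A4 : mul (mul x a) a = mul x a) by (rewrite <- mulA, (idem hH); reflexivity).
destruct (hH (mul x a) (mul a y)) as [[E|E]|[E|E]].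
- apply nR. right.
  assert (F : mul a (mul (mul x a) (mul a y)) = mul a y) by (rewrite mulA, A1, A3; reflexivity).
  rewrite E, A1 in F. symmetry; exact F.
- apply nLx. right.
  assert (F : mul (mul (mul x a) (mul a y)) a = mul x a) by (rewrite <- mulA, A2, A4; reflexivity).
  rewrite E, A2 in F. symmetry; exact F.
- apply nLx. right.
  assert (F : mul a (mul (mul a y) (mul x a)) = mul (mul a y) (mul x a)) by (rewrite mulA, A3; reflexivity).
  rewrite E, A1 in F. symmetry; exact F.
- apply nR. right.
  assert (F : mul (mul (mul a y) (mul x a)) a = mul (mul a y) (mul x a)) by (rewrite <- mulA, A4; reflexivity).
  rewrite E, A2 in F. symmetry; exact F.
Qed.

Set Implicit Arguments.

Lemma pair_prop (H : monoid) (a : H) :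
  finite_subset _ (fun z => z = one \/ z = a) /\ (fun z : H => z = one \/ z = a) one.
Proof.
split; [exists [one; a]; intros x [->| ->]; simpl; auto | left; reflexivity].
Qed.
Definition ppair (H : monoid) (a : H) : Pfin1 H := exist _ (fun z => z = one \/ z = a) (@pair_prop H a).

Arguments ppair {H} a.

Lemma rem_prop (H : monoid) (X : Pfin1 H) (a : H) (Ha : a <> one) :
  finite_subset _ (fun z => proj1_sig X z /\ z <> a) /\ (fun z => proj1_sig X z /\ z <> a) one.
Proof.
destruct X as [X [[l Hl] X1]]; simpl; split.
- exists l; intros x [Hx _]; auto.
- split; auto.
Qed.
Definition prem (H : monoid) (X : Pfin1 H) a (Ha : a <> one) : Pfin1 H := exist _ _ (@rem_prop H X a Ha).

Arguments prem {H} X a Ha.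

Lemma Pone (H : monoid) (X : Pfin1 H) : proj1_sig X one.
Proof. exact (proj2 (proj2_sig X)). Qed.

Arguments Pone {H} X.

Lemma div_sub (H : monoid) (X Y : PfinMonoid H) :
  mdivides _ Y X -> forall z, proj1_sig (Y : Pfin1 H) z -> proj1_sig (X : Pfin1 H) z.
Proof.
intros [A [B ->]] z Hz. simpl. unfold set_mul.
exists (mul one z), one. split; [|split; [apply Pone|rewrite mulm1; rewrite mul1m; reflexivity]].
exists one, z. split; [apply Pone|split; [exact Hz|reflexivity]].
Qed.

Arguments div_sub {H X Y} _ z _.

Lemma unit_div_iff (H : monoid) (Y : PfinMonoid H) :
  unit_divisor _ Y <-> forall z, proj1_sig (Y : Pfin1 H) z -> z = one.
Proof.
split.
- intros D z Hz. exact (div_sub D z Hz).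
- intros HY. assert (E : Y = one).
  { apply Pfin1_eq. intro z; simpl; split; [apply HY|intros ->; apply Pone]. }
  rewrite E. apply mdiv_refl.
Qed.

Lemma nud_iff (H : monoid) (Y : PfinMonoid H) :
  non_unit_divisor _ Y <-> exists z, proj1_sig (Y : Pfin1 H) z /\ z <> one.
Proof.
unfold non_unit_divisor. rewrite unit_div_iff. split.
- intros N. apply NNPP. intro N2. apply N. intros z Hz. apply NNPP. intro n. apply N2. eauto.
- intros [z [Hz nz]] A. apply nz, A, Hz.
Qed.

Lemma decL (H : monoid) (X : Pfin1 H) (a : H) (Ha : a <> one) (Xa : proj1_sig X a) :
  (forall x, proj1_sig X x -> x <> one -> mul x a = x \/ mul x a = a) ->
  X = pmul (prem X a Ha) (ppair a).
Proof.
intros L. apply Pfin1_eq. intro z. simpl. unfold set_mul. split.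
- intros Hz. destruct (classic (z = a)) as [->|nza].
  + exists one, a. split; [split; [apply Pone|auto]|split; [right; auto|rewrite mul1m; auto]].
  + exists z, one. split; [split; auto|split; [left; auto|rewrite mulm1; auto]].
- intros [x [y [[Hx nxa] [Hy ->]]]]. destruct Hy as [->| ->].
  + rewrite mulm1; auto.
  + destruct (classic (x = one)) as [->|nx1].
    * rewrite mul1m; auto.
    * destruct (L x Hx nx1) as [E|E]; rewrite E; auto.
Qed.

Lemma decR (H : monoid) (X : Pfin1 H) (a : H) (Ha : a <> one) (Xa : proj1_sig X a) :
  (forall x, proj1_sig X x -> x <> one -> mul a x = x \/ mul a x = a) ->
  X = pmul (ppair a) (prem X a Ha).
Proof.
intros L. apply Pfin1_eq. intro z. simpl. unfold set_mul. split.
- intros Hz. destruct (classic (z = a)) as [->|nza].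
  + exists a, one. split; [right; auto|split; [split; [apply Pone|auto]|rewrite mulm1; auto]].
  + exists one, z. split; [left; auto|split; [split; auto|rewrite mul1m; auto]].
- intros [y [x [Hy [[Hx nxa] ->]]]]. destruct Hy as [->| ->].
  + rewrite mul1m; auto.
  + destruct (classic (x = one)) as [->|nx1].
    * rewrite mulm1; auto.
    * destruct (L x Hx nx1) as [E|E]; rewrite E; auto.
Qed.

Lemma remove_ex {A : Type} (a : A) (l : list A) :
  In a l -> exists l', length l' < length l /\ forall x, In x l -> x <> a -> In x l'.
Proof.
induction l as [|b l IH]; simpl; [tauto|]. intros Hin.
destruct (classic (b = a)) as [->|nba].
- exists l. split; [lia|]. intros x [->|Hx] nx; [congruence|exact Hx].
- destruct Hin as [->|Hin]; [congruence|]. destruct (IH Hin) as [l' [Hlen Hl']].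
  exists (b :: l'). simpl; split; [lia|]. intros x [->|Hx] nx; [left; auto|right; auto].
Qed.

Lemma pair_irr (H : monoid) (X : PfinMonoid H) (a : H) : a <> one ->
  (forall z : H, proj1_sig (X : Pfin1 H) z <-> (z = one \/ z = a)) ->
  irreducible _ X.
Proof.
intros na HX. split.
- apply nud_iff. exists a. split; [apply HX; right; reflexivity|exact na].
- intros x y nx ny [dx nax] [dy nay] E. apply nax. split; [exact dx|].
  assert (Ex : x = X).
  { apply Pfin1_eq. intro z. split; [apply (div_sub dx)|].
    intros Hz. apply HX in Hz. destruct Hz as [->| ->]; [apply Pone|].
    apply nud_iff in nx. destruct nx as [z [Hz nz]].
    pose proof (div_sub dx z Hz) as Hz'. apply HX in Hz'.
    destruct Hz' as [->| ->]; [contradiction|exact Hz]. }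
  rewrite Ex. apply mdiv_refl.
Qed.

Lemma factor_ind (H : monoid) (hH : almost_breakable H) (n : nat) :
  forall (X : Pfin1 H) (l : list H), length l <= n ->
  (forall z, proj1_sig X z -> z <> one -> In z l) ->
  exists w : list (PfinMonoid H),
    mprod _ w = X /\ NoDup w /\
    Forall (fun Y : PfinMonoid H => exists b, proj1_sig X b /\ b <> one /\ Y = ppair b) w.
Proof.
induction n as [|n IH]; intros X l Hlen Hl;
  (destruct (classic (exists z, proj1_sig X z /\ z <> one)) as [Ex|Nx];
   [|exists nil; split; [apply Pfin1_eq; intro z; simpl; split;
       [intros ->; apply Pone|intros Hz; apply NNPP; intro nz; apply Nx; eauto]|
       split; constructor]]).
- destruct Ex as [z [Hz nz]]. destruct l; [destruct (Hl z Hz nz)|simpl in Hlen; lia].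
- destruct (choose_bottom _ hH l (fun x => proj1_sig X x /\ x <> one)) as [a [[Xa na] Ha]].
  { intros x [Hx nx]. auto. }
  { exact Ex. }
  destruct (remove_ex a l (Hl a Xa na)) as [l' [Hlen' Hl']].
  destruct (IH (prem X a na) l') as [w [Hw [Nw Fw]]].
  { lia. }
  { intros z [Hz nza] nz. apply Hl'; auto. }
  assert (Nin : ~ In (ppair a) w).
  { intros Hin. rewrite Forall_forall in Fw. destruct (Fw _ Hin) as [b [[Hb nba] [nb E]]].
    assert (Hb' : proj1_sig (ppair a) b) by (rewrite E; right; reflexivity).
    destruct Hb' as [Hb'|Hb']; contradiction. }
  assert (Fw' : Forall (fun Y : PfinMonoid H => exists b, proj1_sig X b /\ b <> one /\ Y = ppair b) (ppair a :: w)).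
  { constructor; [exists a; auto|].
    rewrite Forall_forall in *. intros Y HY. destruct (Fw Y HY) as [b [[Hb _] [nb E]]]. eauto. }
  destruct (key _ hH (fun x => proj1_sig X x /\ x <> one) a Ha) as [L|R].
  + exists (w ++ [ppair a]). split; [|split].
    * assert (M : forall l1 l2, mprod (PfinMonoid H) (l1 ++ l2) = mul (mprod _ l1) (mprod _ l2)).
      { induction l1 as [|c l1 IH1]; intros l2.
        - change (mprod (PfinMonoid H) l2 = mul one (mprod _ l2)). rewrite mul1m; reflexivity.
        - change (mul c (mprod _ (l1 ++ l2)) = mul (mul c (mprod _ l1)) (mprod _ l2)).
          rewrite IH1, mulA. reflexivity. }
      rewrite M, Hw. change (mul (prem X a na : PfinMonoid H) (mul (ppair a : PfinMonoid H) one) = X).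
      rewrite mulm1. symmetry. apply decL; auto.
    * apply Permutation_NoDup with (ppair a :: w); [apply Permutation_cons_append|constructor; auto].
    * rewrite Forall_forall in *. intros Y HY. apply Fw'. apply in_app_or in HY. simpl in *. tauto.
  + exists (ppair a :: w). split; [|split].
    * change (mul (ppair a : PfinMonoid H) (mprod _ w) = X). rewrite Hw. symmetry. apply decR; auto.
    * constructor; auto.
    * exact Fw'.
Qed.

Theorem proposition4p2 (H : monoid) (hH : almost_breakable H) :
  (forall X : PfinMonoid H,
     irreducible (PfinMonoid H) X <->
     exists a : H, a <> one /\ forall z : H, proj1_sig (X : Pfin1 H) z <-> (z = one \/ z = a))
  /\
  (forall X : PfinMonoid H,
     exists w : list (PfinMonoid H), squarefree_factorization (PfinMonoid H) w X).
Proof.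
split.
- intros X. split.
  + intros [nX Hirr].
    pose proof nX as Ex. apply nud_iff in Ex.
    destruct (proj1 (proj2_sig (X : Pfin1 H))) as [l Hl].
    destruct (choose_bottom _ hH l (fun x => proj1_sig (X : Pfin1 H) x /\ x <> one)) as [a [[Xa na] Ha]].
    { intros x [Hx _]. auto. }
    { exact Ex. }
    exists a. split; [exact na|]. intros z. split; [|intros [->| ->]; [apply Pone|exact Xa]].
    intros Hz. apply NNPP. intros nz.
    assert (Hp : proj1_sig (prem X a na) z) by (simpl; split; [exact Hz|tauto]).
    assert (N1 : non_unit_divisor (PfinMonoid H) (prem X a na)).
    { apply nud_iff. exists z. split; [exact Hp|tauto]. }
    assert (N2 : non_unit_divisor (PfinMonoid H) (ppair a)).
    { apply nud_iff. exists a. split; [right; reflexivity|exact na]. }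
    assert (nd1 : ~ mdivides (PfinMonoid H) X (prem X a na)).
    { intros D. destruct (div_sub D a Xa) as [_ F]. apply F; reflexivity. }
    assert (nd2 : ~ mdivides (PfinMonoid H) X (ppair a)).
    { intros D. apply nz. exact (div_sub D z Hz). }
    destruct (key _ hH (fun x => proj1_sig (X : Pfin1 H) x /\ x <> one) a Ha) as [L|R].
    * pose proof (decL X na Xa (fun x hx nx => L x (conj hx nx))) as E.
      apply (Hirr (prem X a na) (ppair a) N1 N2).
      -- split; [exact (eq_rect_r (fun T => mdivides (PfinMonoid H) _ T) (mdiv_l (PfinMonoid H) _ _) E)|intros [_ D]; exact (nd1 D)].
      -- split; [exact (eq_rect_r (fun T => mdivides (PfinMonoid H) _ T) (mdiv_r (PfinMonoid H) _ _) E)|intros [_ D]; exact (nd2 D)].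
      -- exact E.
    * pose proof (decR X na Xa (fun x hx nx => R x (conj hx nx))) as E.
      apply (Hirr (ppair a) (prem X a na) N2 N1).
      -- split; [exact (eq_rect_r (fun T => mdivides (PfinMonoid H) _ T) (mdiv_l (PfinMonoid H) _ _) E)|intros [_ D]; exact (nd2 D)].
      -- split; [exact (eq_rect_r (fun T => mdivides (PfinMonoid H) _ T) (mdiv_r (PfinMonoid H) _ _) E)|intros [_ D]; exact (nd1 D)].
      -- exact E.
  + intros [a [na HX]]. exact (pair_irr X na HX).
- intros X.
  destruct (proj1 (proj2_sig (X : Pfin1 H))) as [l Hl].
  destruct (@factor_ind H hH (length l) X l (le_n _) (fun z hz _ => Hl z hz)) as [w [Hw [Nw Fw]]].
  exists w. split; [split|exact Nw]; [|exact Hw].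
  rewrite Forall_forall in *. intros Y HY. destruct (Fw Y HY) as [b [_ [nb ->]]].
  apply (pair_irr (ppair b : PfinMonoid H) nb). intros z. simpl. tauto.
Qed.
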